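(* Let $(X,\Sigma,\mu)$ be a complete $\sigma$-finite measure space, $\mathcal{A}\subseteq\Sigma$ a sub-$\sigma$-algebra with $\mu|_{\mathcal{A}}$ $\sigma$-finite, and $E=E^{\mathcal{A}}$ the conditional expectation. Write $X=B\cup\bigcup_{n\in\mathbb{N}}A_n$, where $\{A_n\}$ is a countable family of pairwise disjoint atoms and $B$ contains no atoms. Let $\Phi,\Psi,\Theta$ be Young functions vanishing only at zero and taking only finite values, such that $\Phi(xy)\le\Psi(x)+\Theta(y)$ for all $x,y\ge0$. If $u\in L^0(\Sigma)$ induces a bounded MCE operator $EM_u:L^{\Phi}(\Sigma)\to L^{\Psi}(\Sigma)$, then (i) $E(u)=0$ $\mu$-a.e. on $B$; (ii) $\sup_{n\in\mathbb{N}} E(u)(A_n)\,\Theta^{-1}\!\left(\frac{1}{\mu(A_n)}\right)<\infty$.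
   Context: A Young function is a convex, even function $\Phi:\mathbb{R}\to[0,\infty]$ with $\Phi(0)=0$, not identically $0$ nor identically $\infty$ on $(0,\infty)$. Its generalized inverse is $\Phi^{-1}(y)=\inf\{x\ge0:\Phi(x)>y\}$. $L^{\Phi}(\Sigma)$ is the Orlicz space of $\Sigma$-measurable $f$ with $\int_X\Phi(kf)\,d\mu<\infty$ for some $k>0$, normed by $\|f\|_\Phi=\inf\{k>0:\int_X\Phi(f/k)d\mu\le1\}$. $E^{\mathcal{A}}f$ is the unique $\mathcal{A}$-measurable function with $\int_A f=\int_A E^{\mathcal{A}}f$ for all $A\in\mathcal{A}$. The MCE operator is $EM_u(f)=E(uf)$. An atom is a set $A$ with $\mu(A)>0$ such that every measurable $F\subset A$ has $\mu(F)=0$ or $\mu(F)=\mu(A)$; a measurable function $g$ is a.e. constant on an atom $A$, with value denoted $g(A)$. *)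

(* Defs.v *)
From HB Require Import structures.
From mathcomp Require Import all_boot all_order all_algebra.
From mathcomp Require Import all_classical all_reals all_analysis.
From mathcomp Require Import measurable_realfun.
Set Implicit Arguments. Unset Strict Implicit. Unset Printing Implicit Defensive.
Import Order.TTheory GRing.Theory Num.Theory.
Local Open Scope classical_set_scope.
Local Open Scope ring_scope.

Section Defs.
Context {d : measure_display} {T : measurableType d} {R : realType}.

(* Finite-valued Young function (finite values are a standing hypothesis
   of the theorem, so Phi : R -> R). *)
Definition young_fun (Phi : R -> R) : Prop :=
  (forall x y t, 0 <= t <= 1 ->
     Phi (t * x + (1 - t) * y) <= t * Phi x + (1 - t) * Phi y) /\
  (forall x, Phi (- x) = Phi x) /\
  (forall x, 0 <= Phi x) /\
  Phi 0 = 0 /\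
  (exists x, 0 < x /\ Phi x != 0).

Definition vanishes_only_at_zero (Phi : R -> R) : Prop :=
  forall x, Phi x = 0 -> x = 0.

Definition young_inv (Phi : R -> R) (y : R) : R :=
  inf [set x | 0 <= x /\ y < Phi x].

Definition in_orlicz (mu : set T -> \bar R) (Phi : R -> R) (f : T -> R) : Prop :=
  measurable_fun setT f /\
  exists k : R, 0 < k /\ (\int[mu]_x (Phi (k * f x))%:E < +oo)%E.

Definition orlicz_norm (mu : set T -> \bar R) (Phi : R -> R) (f : T -> R) : R :=
  inf [set k : R | 0 < k /\ (\int[mu]_x (Phi (f x / k))%:E <= 1)%E].

Definition is_sub_sigma_algebra (SA : set (set T)) : Prop :=
  sigma_algebra setT SA /\ SA `<=` measurable.

Definition sigma_finite_on (SA : set (set T)) (mu : set T -> \bar R) : Prop :=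
  exists2 F : (set T)^nat, setT = \bigcup_(i : nat) F i &
    forall i, SA (F i) /\ (mu (F i) < +oo)%E.

Definition SA_measurable (SA : set (set T)) (g : T -> R) : Prop :=
  forall Bo : set R, measurable Bo -> SA (g @^-1` Bo).

Definition SA_measurable_e (SA : set (set T)) (g : T -> \bar R) : Prop :=
  forall Bo : set (\bar R), measurable Bo -> SA (g @^-1` Bo).

Definition condexp_nneg (SA : set (set T)) (mu : {measure set T -> \bar R})
    (h g : T -> \bar R) : Prop :=
  (forall x, (0 <= g x)%E) /\ SA_measurable_e SA g /\
  forall A, SA A -> (\int[mu]_(x in A) h x = \int[mu]_(x in A) g x)%E.

(* g is (a version of) E^SA h : E h = E h^+ - E h^-, both finite a.e. *)
Definition is_condexp (SA : set (set T)) (mu : {measure set T -> \bar R})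
    (h g : T -> R) : Prop :=
  SA_measurable SA g /\
  exists gp gn : T -> \bar R,
    condexp_nneg SA mu (fun x => (Num.max (h x) 0)%:E) gp /\
    condexp_nneg SA mu (fun x => (Num.max (- h x) 0)%:E) gn /\
    {ae mu, forall x, (gp x < +oo)%E /\ (gn x < +oo)%E /\
                      g x = fine (gp x) - fine (gn x)}.

Definition is_atom (SA : set (set T)) (mu : set T -> \bar R) (A : set T) : Prop :=
  SA A /\ (0 < mu A)%E /\
  forall F, SA F -> F `<=` A -> mu F = 0%E \/ mu F = mu A.

Definition bounded_MCE (SA : set (set T)) (mu : {measure set T -> \bar R})
    (Phi Psi : R -> R) (u : T -> R) : Prop :=
  exists C : R, 0 <= C /\
    forall f, in_orlicz mu Phi f ->
      exists g, is_condexp SA mu (fun x => u x * f x) g /\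
        in_orlicz mu Psi g /\
        orlicz_norm mu Psi g <= C * orlicz_norm mu Phi f.

End Defs.

(* Main.v *)
Require Import Defs.
From HB Require Import structures.
From mathcomp Require Import all_boot all_order all_algebra.
From mathcomp Require Import all_classical all_reals all_analysis.
From mathcomp Require Import measurable_realfun.
From mathcomp Require Import ring lra.
Import Order.TTheory GRing.Theory Num.Theory.
Local Open Scope classical_set_scope.
Local Open Scope ring_scope.

Section Young.
Context {R : realType} (Phi : R -> R) (HP : young_fun Phi).

Lemma y_conv x l : 0 <= l <= 1 -> Phi (l * x) <= l * Phi x.
Proof.
case: HP => cv [ev [nn [z _]]] hl.
have := cv x 0 l hl. by rewrite mulr0 addr0 z mulr0 addr0.
Qed.

Lemma y_sup x l : 1 <= l -> l * Phi x <= Phi (l * x).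
Proof.
move=> hl. have l0 : 0 < l by apply: lt_le_trans hl.
have h : 0 <= l^-1 <= 1.
  by rewrite invr_ge0 ltW //= invf_le1.
have := y_conv (l * x) _ h. rewrite mulrA mulVf ?gt_eqF // mul1r => H.
have il : 0 < l^-1 by rewrite invr_gt0.
by rewrite -(ler_pM2l il) mulrA mulVf ?gt_eqF // mul1r.
Qed.

Lemma y_nn x : 0 <= Phi x.
Proof. by case: HP => _ [_ [nn _]]. Qed.

Lemma y_0 : Phi 0 = 0.
Proof. by case: HP => _ [_ [_ [z _]]]. Qed.

Lemma y_even x : Phi (- x) = Phi x.
Proof. by case: HP => _ [ev _]. Qed.

Lemma y_mono x y : 0 <= x -> x <= y -> Phi x <= Phi y.
Proof.
move=> x0 xy. have [y0|y0] := eqVneq y 0.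
  have -> : x = 0 by apply/eqP; rewrite eq_le x0 andbT -y0.
  by rewrite y0.
have yp : 0 < y by rewrite lt_def y0 (le_trans x0 xy).
have h : 0 <= x / y <= 1.
  by apply/andP; split; [rewrite divr_ge0 // ltW | rewrite ler_pdivrMr // mul1r].
have := y_conv y _ h. rewrite mulfVK // => H.
apply: (le_trans H). rewrite ler_piMl // ?y_nn //. by case/andP: h.
Qed.

Lemma y_abs x : Phi x = Phi `|x|.
Proof. by case: (ler0P x) => h //; rewrite y_even. Qed.

Lemma y_meas : measurable_fun setT Phi.
Proof.
have -> : Phi = (fun x => Phi (Num.max x 0)) \o (@Num.Def.normr _ R).
  apply/funext => x /=. rewrite max_l // -y_abs //.
apply: measurableT_comp; last exact: normr_measurable.
apply: nondecreasing_measurable => // x y xy.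
apply: y_mono; first by rewrite le_max lexx orbT.
by rewrite ge_max !le_max xy lexx /= orbT.
Qed.

Lemma y_exists (H0 : vanishes_only_at_zero Phi) t : 0 < t ->
  exists a, [/\ 0 <= a, Phi a <= t & t < Phi (3 * a)].
Proof.
move=> t0.
have p1 : 0 < Phi 1.
  rewrite lt_def y_nn andbT. apply/eqP => /H0 /eqP. by rewrite oner_eq0.
pose S := [set a | 0 <= a /\ Phi a <= t].
pose a1 := Num.min 1 (t / Phi 1).
have a1p : 0 < a1 by rewrite lt_min ltr01 divr_gt0.
have Sa1 : S a1.
  split; first exact: ltW.
  have := y_conv 1 a1. rewrite mulr1 => H.
  apply: le_trans (H _) _; first by rewrite ltW //= ge_min lexx.
  by rewrite -ler_pdivlMr // ge_min lexx orbT.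
have ub : ubound S (Num.max 1 (t / Phi 1)).
  move=> a [a0 aT]. rewrite leNgt; apply/negP => ha.
  have a1' : 1 <= a by apply: le_trans (ltW ha); rewrite le_max lexx.
  have := y_sup 1 _ a1'. rewrite mulr1 => H.
  have : t < a * Phi 1.
    by rewrite -ltr_pdivrMr //; apply: le_lt_trans ha; rewrite le_max lexx orbT.
  move=> h; have := lt_le_trans h (le_trans H aT). by rewrite ltxx.
have hs : has_sup S by split; [exists a1 | exists (Num.max 1 (t / Phi 1))].
have sa1 : a1 <= sup S by apply: sup_upper_bound.
have sp : 0 < sup S by apply: lt_le_trans sa1.
have c2 : (0:R) < 2 by rewrite ltr0n.
have c3 : (0:R) < 3 by rewrite ltr0n.
have [e Se he] := sup_adherent (divr_gt0 (mulr_gt0 sp c2) c3) hs.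
case: Se => e0 et. exists e; split => //.
rewrite ltNge; apply/negP => h3.
have : S (3 * e) by split => //; rewrite mulr_ge0.
move/(sup_upper_bound hs) => h.
have : sup S < 3 * e.
  lra.
by rewrite ltNge h.
Qed.

End Young.
Arguments y_conv {R Phi} HP x l.
Arguments y_sup {R Phi} HP x l.
Arguments y_nn {R Phi} HP x.
Arguments y_0 {R Phi} HP.
Arguments y_even {R Phi} HP x.
Arguments y_mono {R Phi} HP x y.
Arguments y_abs {R Phi} HP x.
Arguments y_meas {R Phi} HP.
Arguments y_exists {R Phi} HP H0 t.

Section Young3.
Context {R : realType} (Phi Psi Theta : R -> R)
  (HPhi : young_fun Phi) (HPsi : young_fun Psi) (HTheta : young_fun Theta)
  (HPhi0 : vanishes_only_at_zero Phi)
  (Hyoung : forall x y, 0 <= x -> 0 <= y -> Phi (x * y) <= Psi x + Theta y).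

Lemma lemK t c : 0 < t -> 0 < c ->
  (forall a, 0 <= a -> Phi a <= t -> Psi (c * a) <= t) ->
  forall y, 0 <= y -> Theta y <= t -> y < 6 / c.
Proof.
move=> t0 c0 H y y0 Ty. rewrite ltNge; apply/negP => hy.
have [a [a0 Pa P3a]] := y_exists HPhi HPhi0 _ t0.
have ca0 : 0 <= c * a by rewrite mulr_ge0 // ltW.
have h1 := Hyoung _ _ ca0 y0.
have h2 := H a a0 Pa.
have cy : 6 <= c * y.
  have := ler_wpM2l (ltW c0) hy. by rewrite mulrCA mulfV ?gt_eqF // mulr1.
have l1 : 1 <= c * y / 3 by lra.
have h3 := y_sup HPhi (3 * a) _ l1.
have e : c * y / 3 * (3 * a) = c * a * y by field.
rewrite e in h3.
have l2 : 2 * Phi (3 * a) <= c * y / 3 * Phi (3 * a).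
  apply: ler_wpM2r; first exact: y_nn HPhi _.
  lra.
lra.
Qed.

Lemma young_inv_le t c : 0 < t -> 0 < c ->
  (forall a, 0 <= a -> Phi a <= t -> Psi (c * a) <= t) ->
  young_inv Theta t <= 6 / c.
Proof.
move=> t0 c0 H. rewrite /young_inv.
have hl : has_lbound [set x | 0 <= x /\ t < Theta x].
  by exists 0 => x [].
apply: (ge_inf hl). split; first by rewrite divr_ge0 // ltW.
rewrite ltNge; apply/negP => h.
have y0 : 0 <= 6 / c by rewrite divr_ge0 // ltW.
by have := lemK _ _ t0 c0 H (6 / c) y0 h; rewrite ltxx.
Qed.

End Young3.

Lemma young_inv_ge0 {R : realType} (Theta : R -> R) : young_fun Theta ->
  vanishes_only_at_zero Theta -> forall t, 0 < t -> 0 <= young_inv Theta t.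
Proof.
move=> HT HT0 t t0. rewrite /young_inv.
apply: lb_le_inf; last by move=> x [].
have [a [a0 _ h]] := y_exists HT HT0 _ t0.
exists (3 * a); split => //. by rewrite mulr_ge0.
Qed.


Section Meas.
Context {d : measure_display} {T : measurableType d} {R : realType}
  (mu : {measure set T -> \bar R}) (SA : set (set T))
  (HSA : is_sub_sigma_algebra SA).

Lemma SA_meas A : SA A -> measurable A.
Proof. by case: HSA => _; apply. Qed.

Lemma SA0 : SA set0.
Proof. by case: HSA => -[]. Qed.

Lemma SAC A : SA A -> SA (~` A).
Proof. by case: HSA => -[_ h _] _ /h; rewrite setTD. Qed.

Lemma SAbig (F : (set T)^nat) : (forall n, SA (F n)) -> SA (\bigcup_n F n).
Proof. by case: HSA => -[_ _ h] _; apply: h. Qed.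

Lemma SAU A B : SA A -> SA B -> SA (A `|` B).
Proof.
move=> hA hB; rewrite -bigcup2E; apply: SAbig => -[|[|k]] //=; exact: SA0.
Qed.

Lemma SAI A B : SA A -> SA B -> SA (A `&` B).
Proof.
move=> hA hB; rewrite -(setCK A) -(setCK B) -setCU; apply: SAC.
by apply: SAU; apply: SAC.
Qed.

Lemma SAT : SA setT.
Proof. by rewrite -setC0; apply: SAC; exact: SA0. Qed.

Lemma SAmf (g : T -> R) : SA_measurable SA g -> measurable_fun setT g.
Proof. by move=> h _ B mB; rewrite setTI; apply: SA_meas; apply: h. Qed.

Lemma SAmfe (g : T -> \bar R) : SA_measurable_e SA g -> measurable_fun setT g.
Proof. by move=> h _ B mB; rewrite setTI; apply: SA_meas; apply: h. Qed.

Lemma SA_lt (g : T -> R) r : SA_measurable SA g -> SA [set x | g x < r].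
Proof.
move=> h. have -> : [set x | g x < r] = g @^-1` [set` `]-oo, r[] .
  by apply/seteqP; split => x /=; rewrite in_itv.
apply: h; exact: measurable_itv.
Qed.

Lemma SA_ge (g : T -> R) r : SA_measurable SA g -> SA [set x | r <= g x].
Proof.
move=> h. have -> : [set x | r <= g x] = ~` [set x | g x < r].
  by apply/seteqP; split => x /=; rewrite ltNge; [move=> hh /negP; apply | move/negP/negPn].
by apply: SAC; apply: SA_lt.
Qed.

Lemma SA_ele (g : T -> \bar R) r : SA_measurable_e SA g -> SA [set x | (g x <= r%:E)%E].
Proof.
move=> h. have -> : [set x | (g x <= r%:E)%E] = g @^-1` [set` `]-oo, r%:E]] .
  by apply/seteqP; split => x /=; rewrite in_itv.
apply: h; exact: emeasurable_itv.
Qed.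

Lemma SA_elt (g : T -> \bar R) r : SA_measurable_e SA g -> SA [set x | (g x < r)%E].
Proof.
move=> h. have -> : [set x | (g x < r)%E] = g @^-1` [set` `]-oo, r[] .
  by apply/seteqP; split => x /=; rewrite in_itv.
apply: h; exact: emeasurable_itv.
Qed.

End Meas.


Section Core.
Context {d : measure_display} {T : measurableType d} {R : realType}
  (mu : {measure set T -> \bar R}) (SA : set (set T))
  (HSA : is_sub_sigma_algebra SA).
Local Open Scope ereal_scope.

Lemma core (F : set T) (p n P N : T -> \bar R) (G : T -> R) (a eps K : R) :
  SA F -> mu F < +oo -> (0 < a)%R -> (0 < eps)%R ->
  (forall x, 0 <= p x) -> (forall x, 0 <= n x) ->
  (forall x, 0 <= P x) -> (forall x, 0 <= N x) ->
  measurable_fun setT p -> measurable_fun setT n ->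
  measurable_fun setT P -> measurable_fun setT N ->
  SA_measurable SA G ->
  (forall D, SA D -> D `<=` F ->
     \int[mu]_(x in D) P x = a%:E * \int[mu]_(x in D) p x) ->
  (forall D, SA D -> D `<=` F ->
     \int[mu]_(x in D) N x = a%:E * \int[mu]_(x in D) n x) ->
  {ae mu, forall x, P x < +oo /\ N x < +oo /\ G x = (fine (P x) - fine (N x))%R} ->
  {ae mu, forall x, F x -> n x + eps%:E <= p x} ->
  (forall x, F x -> n x <= K%:E) ->
  {ae mu, forall x, F x -> (a * eps / 2 <= G x)%R}.
Proof.
move=> SAF Ffin a0 e0 p0 n0 P0 N0 mp mn mP mN mG HP HN Hfin Hpn HK.
set c := (a * eps / 2)%R.
set D := F `&` [set x | (G x < c)%R].
have SAD : SA D by apply: SAI => //; apply: SA_lt.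
have mD : measurable D by apply: SA_meas HSA _ SAD.
have DF : D `<=` F by apply: subIsetl.
suff D0 : mu D = 0.
  exists D; split => // x /= h.
  have Fx : F x by apply: contrapT => nF; apply: h => /nF.
  split => //=. rewrite ltNge; apply/negP => cg; apply: h => _; exact: cg.
have mF : measurable F by apply: SA_meas HSA _ SAF.
have Dfin : mu D < +oo.
  by apply: le_lt_trans Ffin; apply: le_measure => //; rewrite inE.
have mD0 : 0 <= mu D by [].
have I1 : \int[mu]_(x in D) P x <= \int[mu]_(x in D) (N x + c%:E).
  apply: ae_ge0_le_integral => //.
  - exact: measurable_funS mP.
  - by move=> x _; rewrite adde_ge0 // lee_fin /c; rewrite !mulr_ge0 // ltW.
  - apply: emeasurable_funD; first exact: measurable_funS mN.
    exact: measurable_cst.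
  - apply: filterS Hfin => x [Pf [Nf Gx]] [Fx Gc].
    rewrite -(fineK (x:=P x)); last by rewrite ge0_fin_numE.
    rewrite -(fineK (x:=N x)); last by rewrite ge0_fin_numE.
    rewrite -EFinD lee_fin. move: Gc => /= Gc. rewrite Gx in Gc. rewrite /c in Gc *. lra.
have I2 : \int[mu]_(x in D) (n x + eps%:E) <= \int[mu]_(x in D) p x.
  apply: ae_ge0_le_integral => //.
  - by move=> x _; rewrite adde_ge0 // lee_fin ltW.
  - apply: emeasurable_funD; first exact: measurable_funS mn.
    exact: measurable_cst.
  - exact: measurable_funS mp.
  - apply: filterS Hpn => x h [Fx _]; exact: h.
have mN' : measurable_fun D N by apply: measurable_funS mN.
have mn' : measurable_fun D n by apply: measurable_funS mn.
have cp : 0 <= c%:E by rewrite lee_fin /c !mulr_ge0 // ltW.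
have ep : 0 <= eps%:E by rewrite lee_fin ltW.
rewrite (ge0_integralD mu mD (fun x _ => N0 x) mN' (fun x _ => cp) (measurable_cst _)) in I1.
rewrite (ge0_integralD mu mD (fun x _ => n0 x) mn' (fun x _ => ep) (measurable_cst _)) in I2.
have Ec := integral_cst mu mD.
rewrite /cst /= in Ec. rewrite !Ec in I1 I2.
rewrite HN // in I1. rewrite HP // in I1.
have In0 : 0 <= \int[mu]_(x in D) n x by apply: integral_ge0.
have InK : \int[mu]_(x in D) n x <= K%:E * mu D.
  rewrite -Ec. apply: (ge0_le_integral mu mD (fun x _ => n0 x) mn' (measurable_cst _)).
  by move=> x /DF /HK.
have mDf : mu D \is a fin_num by rewrite ge0_fin_numE.
have Inf : \int[mu]_(x in D) n x \is a fin_num.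
  rewrite ge0_fin_numE //. apply: le_lt_trans InK _.
  by rewrite -(fineK mDf) -EFinM ltry.
move: I1 I2 In0 mD0.
rewrite -(fineK Inf) -(fineK mDf).
set i := fine _. set m := fine (mu D).
move=> I1 I2 In0 mD0.
have a0' : 0 <= a%:E by rewrite lee_fin ltW.
have I4 := le_trans (lee_wpmul2l a0' I2) I1.
rewrite -?EFinM -?EFinD -?EFinM -?EFinD lee_fin in I4.
rewrite lee_fin in mD0.
have h : (a * eps * m <= 0)%R by rewrite /c in I4; lra.
have ae0 : (0 < a * eps)%R by rewrite mulr_gt0.
rewrite pmulr_rle0 // in h.
by apply/eqP; rewrite eqe; apply/eqP; apply/le_anti/andP.
Qed.

End Core.


Lemma maxM {R : realType} (a y : R) : 0 < a -> Num.max (a * y) 0 = a * Num.max y 0.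
Proof. by move=> a0; rewrite maxr_pMr ?mulr0 // ltW. Qed.

Section Op.
Context {d : measure_display} {T : measurableType d} {R : realType}
  (mu : {measure set T -> \bar R}) (SA : set (set T))
  (HSA : is_sub_sigma_algebra SA)
  (Phi Psi : R -> R) (HPhi : young_fun Phi) (HPsi : young_fun Psi)
  (u : T -> R) (Hu : measurable_fun setT u) (C : R) (C0 : 0 <= C)
  (HC : forall f, in_orlicz mu Phi f ->
      exists g, is_condexp SA mu (fun x => u x * f x) g /\
        in_orlicz mu Psi g /\
        orlicz_norm mu Psi g <= C * orlicz_norm mu Phi f).

Lemma cond_props (h g : T -> \bar R) : condexp_nneg SA mu h g ->
  (forall x, (0 <= g x)%E) /\ measurable_fun setT g.
Proof. by case=> g0 [gm _]; split => //; apply: SAmfe HSA _ gm. Qed.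

Lemma mYoung (Ph : R -> R) (HPh : young_fun Ph) (h : T -> R) :
  measurable_fun setT h -> measurable_fun setT (fun x => (Ph (h x))%:E).
Proof.
move=> mh; apply/measurable_EFinP; apply: measurableT_comp mh.
exact: y_meas HPh.
Qed.

Lemma mmax (h : T -> R) :
  measurable_fun setT h -> measurable_fun setT (fun x => (Num.max (h x) 0)%:E).
Proof.
move=> mh; apply/measurable_EFinP.
change (measurable_fun setT ((fun y => Num.max y 0) \o h)).
apply: (measurableT_comp _ mh).
apply: nondecreasing_measurable => // x y xy.
by rewrite ge_max !le_max xy lexx /= orbT.
Qed.

Lemma op_bound (sg : R) (sgH : sg = 1 \/ sg = -1) (p n : T -> \bar R)
  (Hp : condexp_nneg SA mu (fun x => (Num.max (sg * u x) 0)%:E) p)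
  (Hn : condexp_nneg SA mu (fun x => (Num.max (- (sg * u x)) 0)%:E) n)
  (F : set T) (m eps K : R) :
  SA F -> mu F = m%:E -> 0 < m -> 0 < eps ->
  {ae mu, forall x, F x -> (n x + eps%:E <= p x)%E} ->
  (forall x, F x -> (n x <= K%:E)%E) ->
  forall a, 0 <= a -> Phi a <= 1 / m -> Psi (eps / (2 * (C + 1)) * a) <= 1 / m.
Proof.
move=> SAF muF m0 e0 Hpn HK a a0 Pa.
have [->|ap] := eqVneq a 0.
  by rewrite mulr0 (y_0 HPsi) divr_ge0 // ltW.
have {ap} ap : 0 < a by rewrite lt_def ap a0.
have mF : measurable F by apply: SA_meas HSA _ SAF.
have sgE : Phi (sg * a) = Phi a.
  by case: sgH => ->; rewrite ?mul1r // mulN1r (y_even HPhi).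
pose f := fun x => sg * a * \1_F x.
have mf : measurable_fun setT f.
  apply: measurable_funM; first exact: measurable_cst.
  exact: measurable_indic.
have Phif : forall x, Phi (f x) = Phi a * \1_F x.
  move=> x; rewrite /f indicE; case: (x \in F); rewrite ?mulr1 ?mulr0 //.
  exact: y_0 HPhi.
have IPhi : (\int[mu]_x (Phi (f x))%:E = (Phi a * m)%:E)%E.
  under eq_integral => x _ do rewrite Phif EFinM.
  have mI : measurable_fun setT (fun x => (\1_F x : R)%:E).
    by apply/measurable_EFinP; exact: measurable_indic.
  have i0 : forall x, setT x -> (0 <= (\1_F x : R)%:E)%E.
    by move=> x _; rewrite lee_fin indicE.
  have k0 : (0 <= (Phi a)%:E)%E by rewrite lee_fin (y_nn HPhi).
  rewrite (ge0_integralZl mu measurableT mI i0 k0).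
  by rewrite integral_indic // setIT muF.
have Of : in_orlicz mu Phi f.
  split => //; exists 1; split; first exact: ltr01.
  under eq_integral => x _ do rewrite mul1r.
  by rewrite IPhi ltry.
have Nf : orlicz_norm mu Phi f <= 1.
  rewrite /orlicz_norm; apply: ge_inf.
    by exists 0 => k [k0 _]; apply: ltW.
  split; first exact: ltr01.
  under eq_integral => x _ do rewrite divr1.
  rewrite IPhi lee_fin. by rewrite -ler_pdivlMr // mulrC.
have [g [[Gm [P [N [HP [HN Hfin]]]]] [Og Ng]]] := HC f Of.
have [p0 mp] := cond_props _ _ Hp.
have [n0 mn] := cond_props _ _ Hn.
have [P0 mP] := cond_props _ _ HP.
have [N0 mN] := cond_props _ _ HN.
have Hg := core mu SA HSA F p n P N g a eps K SAF (ltac:(by rewrite muF ltry)) ap e0 p0 n0 P0 N0 mp mn mP mN Gm _ _ Hfin Hpn HK.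
have mu0 : measurable_fun setT (fun x => sg * u x).
  by apply: measurable_funM => //; exact: measurable_cst.
have mu1 : measurable_fun setT (fun x => - (sg * u x)) by apply: measurable_funN.
have fF : forall x, F x -> f x = sg * a by move=> x Fx; rewrite /f indicE mem_set // mulr1.
have a0E : (0 <= a%:E)%E by rewrite lee_fin.
have HPi : forall D, SA D -> D `<=` F ->
    (\int[mu]_(x in D) P x = a%:E * \int[mu]_(x in D) p x)%E.
  move=> D SAD DF; have mD : measurable D by apply: SA_meas HSA _ SAD.
  case: HP => _ [_ HP']; case: Hp => _ [_ Hp'].
  rewrite -HP' // -Hp' //.
  transitivity (\int[mu]_(x in D) (a%:E * (Num.max (sg * u x) 0)%:E))%E.
    apply: eq_integral => x /set_mem /DF Fx.
    by rewrite -EFinM -maxM // fF //; congr (Num.max _ 0)%:E; ring.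
  have mf' := measurable_funS measurableT (subsetT D) (mmax _ mu0).
  have f0' : forall x, D x -> (0 <= (Num.max (sg * u x) 0)%:E)%E by move=> x _; rewrite lee_fin le_max lexx orbT.
  by rewrite (ge0_integralZl mu mD mf' f0' a0E).
have HNi : forall D, SA D -> D `<=` F ->
    (\int[mu]_(x in D) N x = a%:E * \int[mu]_(x in D) n x)%E.
  move=> D SAD DF; have mD : measurable D by apply: SA_meas HSA _ SAD.
  case: HN => _ [_ HN']; case: Hn => _ [_ Hn'].
  rewrite -HN' // -Hn' //.
  transitivity (\int[mu]_(x in D) (a%:E * (Num.max (- (sg * u x)) 0)%:E))%E.
    apply: eq_integral => x /set_mem /DF Fx.
    by rewrite -EFinM -maxM // fF //; congr (Num.max _ 0)%:E; ring.
  have mf' := measurable_funS measurableT (subsetT D) (mmax _ mu1).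
  have f0' : forall x, D x -> (0 <= (Num.max (- (sg * u x)) 0)%:E)%E by move=> x _; rewrite lee_fin le_max lexx orbT.
  by rewrite (ge0_integralZl mu mD mf' f0' a0E).
have {}Hg := Hg HPi HNi.
have mg : measurable_fun setT g by apply: SAmf HSA _ Gm.
have [_ [k0 [k00 Ik0]]] := Og.
set I0 := (\int[mu]_x (Psi (k0 * g x))%:E)%E in Ik0.
have I00 : (0 <= I0)%E by apply: integral_ge0 => x _; rewrite lee_fin (y_nn HPsi).
have I0f : I0 \is a fin_num by rewrite ge0_fin_numE.
set L := fine I0 + 1.
have fI0 : 0 <= fine I0 by apply: fine_ge0.
have L1 : 1 <= L by rewrite /L; lra.
have L0 : 0 < L by lra.
have Sne : [set k | 0 < k /\ (\int[mu]_x (Psi (g x / k))%:E <= 1)%E] !=set0.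
  exists (L / k0); split; first by rewrite divr_gt0.
  have mk : measurable_fun setT (fun x => (Psi (k0 * g x))%:E).
    by apply: mYoung => //; apply: measurable_funM => //; exact: measurable_cst.
  apply: (@le_trans _ _ (\int[mu]_x ((L^-1)%:E * (Psi (k0 * g x))%:E))%E).
    apply: ge0_le_integral => //.
    - by move=> x _; rewrite lee_fin (y_nn HPsi).
    - apply: mYoung => //; apply: measurable_funM => //; exact: measurable_cst.
    - by apply: emeasurable_funM => //; exact: measurable_cst.
    - move=> x _; rewrite -EFinM lee_fin.
      have -> : g x / (L / k0) = L^-1 * (k0 * g x).
        by field; rewrite gt_eqF //= gt_eqF.
      apply: y_conv => //. rewrite invr_ge0 ltW //=. by rewrite invf_le1.
  rewrite ge0_integralZl //; last 2 first.
    - by move=> x _; rewrite lee_fin (y_nn HPsi).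
    - by rewrite lee_fin invr_ge0 ltW.
  rewrite -/I0 -(fineK I0f) -EFinM lee_fin.
  by rewrite ler_pdivrMl // mulr1 /L; lra.
have Ngl : orlicz_norm mu Psi g < C + 1.
  apply: le_lt_trans Ng _. have : C * orlicz_norm mu Phi f <= C * 1 by apply: ler_wpM2l.
  rewrite mulr1 => h; lra.
rewrite /orlicz_norm in Ngl.
have [k [kp Ik] kC] := inf_lt Sne Ngl.
set c := a * eps / 2 / k.
have c0 : 0 <= c by rewrite /c !divr_ge0 // ?mulr_ge0 // ltW.
have Low : ((Psi c * m)%:E <= \int[mu]_x (Psi (g x / k))%:E)%E.
  have mI : measurable_fun setT (fun x => (\1_F x : R)%:E).
    by apply/measurable_EFinP; exact: measurable_indic.
  have i0 : forall x, setT x -> (0 <= (\1_F x : R)%:E)%E.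
    by move=> x _; rewrite lee_fin indicE.
  have k1 : (0 <= (Psi c)%:E)%E by rewrite lee_fin (y_nn HPsi).
  have EI : mu F = (\int[mu]_x (\1_F x : R)%:E)%E by rewrite integral_indic // setIT.
  rewrite EFinM -muF EI.
  rewrite -(ge0_integralZl mu measurableT mI i0 k1).
  apply: ae_ge0_le_integral => //.
  - by move=> x _; rewrite mule_ge0.
  - by apply: emeasurable_funM => //; exact: measurable_cst.
  - by move=> x _; rewrite lee_fin (y_nn HPsi).
  - apply: mYoung => //; apply: measurable_funM => //; exact: measurable_cst.
  - apply: filterS Hg => x h _; rewrite -EFinM lee_fin indicE.
    case: (boolP (x \in F)) => xF; last by rewrite mulr0 (y_nn HPsi).
    rewrite mulr1; apply: (y_mono HPsi) => //.
    rewrite /c; apply: ler_wpM2r; first by rewrite invr_ge0 ltW.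
    exact: h (set_mem xF).
have Pc : Psi c <= 1 / m.
  rewrite ler_pdivlMr // -lee_fin; exact: le_trans Low Ik.
apply: le_trans Pc; apply: (y_mono HPsi).
  by rewrite mulr_ge0 // divr_ge0 ?ltW // mulr_gt0 // ltr_wpDl.
have C1 : 0 < C + 1 by lra.
have -> : eps / (2 * (C + 1)) * a = (a * eps / 2) * (C + 1)^-1.
  by field; rewrite gt_eqF.
rewrite /c; apply: ler_wpM2l; first by rewrite divr_ge0 // mulr_ge0 // ltW.
by rewrite lef_pV2 ?posrE // ltW.
Qed.

End Op.

From mathcomp Require Import zify.

Lemma exists_nat {R : realType} (r : R) : exists k : nat, r < k%:R.
Proof. by exists (Num.truncn r).+1; apply: truncnS_gt. Qed.

Section Shrink.
Context {d : measure_display} {T : measurableType d} {R : realType}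
  (mu : {measure set T -> \bar R}) (SA : set (set T))
  (HSA : is_sub_sigma_algebra SA) (B : set T)
  (HBnoatom : forall F, F `<=` B -> ~ is_atom SA mu F).

Lemma shrink F0 r0 : SA F0 -> F0 `<=` B -> mu F0 = r0%:E -> 0 < r0 ->
  forall j : nat, exists F r, [/\ SA F, F `<=` F0, mu F = r%:E, 0 < r &
     r * j.+1%:R <= r0].
Proof.
move=> SA0 FB m0 r00; elim=> [|j [F [r [SAF FF0 mF r0' rj]]]].
  by exists F0, r0; split => //; rewrite mulr1.
have : ~ is_atom SA mu F by apply: HBnoatom => x /FF0 /FB.
move=> nat.
have [G [SAG GF G0 GF']] : exists G, [/\ SA G, G `<=` F, mu G != 0%E & mu G != mu F].
  apply: contrapT => hn; apply: nat; split => //; split; first by rewrite mF lte_fin.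
  move=> G SAG GF; case: (eqVneq (mu G) 0%E) => [->|h0]; first by left.
  case: (eqVneq (mu G) (mu F)) => [->|h1]; first by right.
  by exfalso; apply: hn; exists G; split.
have mG : measurable G by apply: SA_meas HSA _ SAG.
have mFm : measurable F by apply: SA_meas HSA _ SAF.
have SAFG : SA (F `\` G) by rewrite setDE; apply: SAI => //; apply: SAC.
have dec : mu F = (mu (F `\` G) + mu G)%E.
  by rewrite (measureDI mu mFm mG) setIidr.
have Gle : (mu G <= mu F)%E by rewrite le_measure ?inE.
have Gf : mu G \is a fin_num by rewrite ge0_fin_numE // (le_lt_trans Gle) // mF ltry.
have mFG : measurable (F `\` G) by apply: measurableD.
have FGle : (mu (F `\` G) <= mu F)%E by rewrite le_measure ?inE.
have FGf : mu (F `\` G) \is a fin_num.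
  by rewrite ge0_fin_numE // (le_lt_trans FGle) // mF ltry.
have [g Eg] : exists g, mu G = g%:E by exists (fine (mu G)); rewrite fineK.
have [h Eh] : exists h, mu (F `\` G) = h%:E by exists (fine (mu (F `\` G))); rewrite fineK.
move: dec G0 GF'; rewrite Eg Eh mF.
rewrite -EFinD => dec2 G0 GF'.
have {}dec2 : r = h + g by case: dec2.
have g0 : 0 <= g by rewrite -lee_fin -Eg.
have h0 : 0 <= h by rewrite -lee_fin -Eh.
have gp : 0 < g by rewrite lt_def g0 andbT; apply: contraNneq G0 => ->.
have hp : 0 < h.
  rewrite lt_def h0 andbT; apply/eqP => h00; move: GF'; rewrite dec2 h00 add0r.
  by rewrite eqxx.
have jj : (j.+2%:R : R) <= 2 * j.+1%:R by rewrite -natrM ler_nat; lia.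
have key : forall z, 0 < z -> z * 2 <= r -> z * j.+2%:R <= r0.
  move=> z z0 z2.
  have zj : z * j.+2%:R <= z * (2 * j.+1%:R) by rewrite ler_wpM2l // ltW.
  apply: le_trans zj _; rewrite mulrA; apply: le_trans rj.
  by apply: ler_wpM2r => //; rewrite ler0n.
case: (leP g h) => gh.
  exists G, g; split => //; first by move=> x /GF /FF0.
  by apply: key => //; lra.
exists (F `\` G), h; split => //; first by move=> x [/FF0].
by apply: key => //; lra.
Qed.

End Shrink.

Theorem theorem3p3 (d : measure_display) (T : measurableType d) (R : realType)
  (mu : {measure set T -> \bar R})
  (Hcomplete : measure_is_complete mu)
  (Hsfin : sigma_finite setT mu)
  (SA : set (set T)) (HSA : is_sub_sigma_algebra SA)
  (HSAfin : sigma_finite_on SA mu)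
  (I : set nat) (Aseq : nat -> set T) (B : set T)
  (Hatoms : forall n, I n -> is_atom SA mu (Aseq n))
  (Hdisj : forall n m, I n -> I m -> n <> m -> Aseq n `&` Aseq m = set0)
  (HB : SA B) (HBdisj : forall n, I n -> B `&` Aseq n = set0)
  (Hcover : setT = B `|` \bigcup_(n in I) Aseq n)
  (HBnoatom : forall F, F `<=` B -> ~ is_atom SA mu F)
  (Phi Psi Theta : R -> R)
  (HPhi : young_fun Phi) (HPsi : young_fun Psi) (HTheta : young_fun Theta)
  (HPhi0 : vanishes_only_at_zero Phi) (HPsi0 : vanishes_only_at_zero Psi)
  (HTheta0 : vanishes_only_at_zero Theta)
  (Hyoung : forall x y, 0 <= x -> 0 <= y -> Phi (x * y) <= Psi x + Theta y)
  (u : T -> R) (Hu : measurable_fun setT u)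
  (Hbdd : bounded_MCE SA mu Phi Psi u)
  (Eu : T -> R) (HEu : is_condexp SA mu u Eu) :
  {ae mu, forall x, B x -> Eu x = 0} /\
  exists M : R, forall n, I n ->
    {ae mu, forall x, Aseq n x ->
       Eu x * young_inv Theta (1 / fine (mu (Aseq n))) <= M}.
Proof.
have [C [C0 HC]] := Hbdd.
case: HEu => EuSA [gp [gn [Hgp [Hgn Hfin]]]].
have OP := op_bound mu SA HSA Phi Psi HPhi HPsi u Hu C C0 HC.
have C1 : 0 < C + 1 by lra.
pose sg_ (s : bool) : R := if s then 1 else -1.
pose p_ (s : bool) := if s then gp else gn.
pose n_ (s : bool) := if s then gn else gp.
have sgH : forall s, sg_ s = 1 \/ sg_ s = -1 by case; [left|right].
have Hp_ : forall s, condexp_nneg SA mu (fun x => (Num.max (sg_ s * u x) 0)%:E) (p_ s).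
  case => /=.
  - have -> : (fun x => (Num.max (1 * u x) 0)%:E) = (fun x => (Num.max (u x) 0)%:E :> \bar R).
      by apply/funext => x; rewrite mul1r.
    exact: Hgp.
  - have -> : (fun x => (Num.max (-1 * u x) 0)%:E) = (fun x => (Num.max (- u x) 0)%:E :> \bar R).
      by apply/funext => x; rewrite mulN1r.
    exact: Hgn.
have Hn_ : forall s, condexp_nneg SA mu (fun x => (Num.max (- (sg_ s * u x)) 0)%:E) (n_ s).
  case => /=.
  - have -> : (fun x => (Num.max (- (1 * u x)) 0)%:E) = (fun x => (Num.max (- u x) 0)%:E :> \bar R).
      by apply/funext => x; rewrite mul1r.
    exact: Hgn.
  - have -> : (fun x => (Num.max (- (-1 * u x)) 0)%:E) = (fun x => (Num.max (u x) 0)%:E :> \bar R).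
      by apply/funext => x; rewrite mulN1r opprK.
    exact: Hgp.
have [gp0 _] := cond_props mu SA HSA _ _ Hgp.
have [gn0 _] := cond_props mu SA HSA _ _ Hgn.
have SAgp : SA_measurable_e SA gp by case: Hgp => _ [].
have SAgn : SA_measurable_e SA gn by case: Hgn => _ [].
have [N0 [mN0 N00 HN0]] := Hfin.
have out : forall x, ~ N0 x ->
    [/\ (gp x < +oo)%E, (gn x < +oo)%E & Eu x = fine (gp x) - fine (gn x)].
  move=> x nx; apply: contrapT => h; apply: nx; apply: HN0 => /= -[a [b c]].
  by apply: h; split.
have ord : forall s x eps, ~ N0 x -> eps <= sg_ s * Eu x ->
    (n_ s x + eps%:E <= p_ s x)%E.
  move=> s x e nx h; have [gpf gnf E] := out x nx.
  have gpF : gp x \is a fin_num by rewrite ge0_fin_numE.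
  have gnF : gn x \is a fin_num by rewrite ge0_fin_numE.
  rewrite /n_ /p_; case: s h => /=; rewrite E ?mul1r ?mulN1r => h;
    rewrite -(fineK gpF) -(fineK gnF) -EFinD lee_fin; lra.
have KEY : forall s F m eps (K : R), SA F -> mu F = m%:E -> 0 < m -> 0 < eps ->
    (forall x, F x -> ~ N0 x -> eps <= sg_ s * Eu x) ->
    (forall x, F x -> (n_ s x <= K%:E)%E) ->
    forall a, 0 <= a -> Phi a <= 1 / m -> Psi (eps / (2 * (C + 1)) * a) <= 1 / m.
  move=> s F m e K SAF muF m0 e0 hF hK.
  have Hae : {ae mu, forall x, F x -> (n_ s x + e%:E <= p_ s x)%E}.
    exists N0; split => // x /= hx; apply: contrapT => nx; apply: hx => Fx.
    by apply: ord => //; apply: hF.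
  exact: (OP (sg_ s) (sgH s) (p_ s) (n_ s) (Hp_ s) (Hn_ s) F m e K SAF muF m0 e0 Hae hK).
split; last first.
  set M := 12 * (C + 1) + 1.
  have M0 : 0 < M by rewrite /M; lra.
  exists M => k Ik.
  have [SAA [A0 Aat]] := Hatoms k Ik.
  have mA : measurable (Aseq k) by apply: SA_meas HSA _ SAA.
  have Afin : (mu (Aseq k) < +oo)%E.
    case: HSAfin => Fs Fcov Fsf.
    have [i Hi] : exists i, mu (Aseq k `&` Fs i) != 0%E.
      apply: contrapT => hn.
      have hb : mu.-negligible (\bigcup_i (Aseq k `&` Fs i)).
        apply: negligible_bigcup => i; exists (Aseq k `&` Fs i); split => //.
          by apply: measurableI => //; apply: SA_meas HSA _ (Fsf i).1.
        apply/eqP; apply: contrapT => /negP h; apply: hn; by exists i.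
      have : mu.-negligible (Aseq k).
        move: hb; apply: negligibleS => x Ax.
        have : [set: T] x by [].
        by rewrite Fcov => -[i _ Fi]; exists i.
      case=> N' [mN' N'0 AN'].
      have : (mu (Aseq k) <= mu N')%E by rewrite le_measure ?inE.
      by rewrite N'0 leNgt A0.
    have SAi : SA (Aseq k `&` Fs i) by apply: (SAI _ HSA) => //; exact: (Fsf i).1.
    case: (Aat _ SAi (@subIsetl _ _ _)) => h; first by rewrite h eqxx in Hi.
    rewrite -h; apply: le_lt_trans (Fsf i).2.
    have mi : measurable (Aseq k `&` Fs i) by apply: SA_meas HSA _ SAi.
    have mFi : measurable (Fs i) by apply: SA_meas HSA _ (Fsf i).1.
    by apply: le_measure; rewrite ?inE //; apply: subIsetr.
  have [m Em] : exists m, mu (Aseq k) = m%:E.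
    by exists (fine (mu (Aseq k))); rewrite fineK // ge0_fin_numE.
  have m0 : 0 < m by rewrite -lte_fin -Em.
  rewrite Em /=.
  have th0 := young_inv_ge0 Theta HTheta HTheta0 (1 / m) (divr_gt0 ltr01 m0).
  set th := young_inv Theta (1 / m) in th0 *.
  case: (eqVneq th 0) => [->|thn].
    by apply: aeW => x _; rewrite mulr0 ltW.
  have thp : 0 < th by rewrite lt_def thn th0.
  set eps := M / th.
  have e0 : 0 < eps by rewrite divr_gt0.
  set P := Aseq k `&` [set x | eps <= Eu x].
  have SAP : SA P by apply: (SAI _ HSA) => //; apply: (SA_ge _ HSA).
  have mP : measurable P by apply: SA_meas HSA _ SAP.
  suff P0 : mu P = 0%E.
    exists P; split => // x /= h.
    have Ax : Aseq k x by apply: contrapT => nA; apply: h => /nA.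
    split => //=; rewrite /eps ler_pdivrMr //.
    by rewrite leNgt; apply/negP => hh; apply: h => _; exact: ltW.
  apply: contrapT => P0.
  pose Pk (j : nat) := P `&` [set x | (gp x <= j%:R%:E)%E] `&` [set x | (gn x <= j%:R%:E)%E].
  have SAPk : forall j, SA (Pk j).
    move=> j; apply: (SAI _ HSA); last exact: (SA_ele _ _ _ SAgn).
    by apply: (SAI _ HSA) => //; exact: (SA_ele _ _ _ SAgp).
  have [j Hj] : exists j, mu (Pk j) != 0%E.
    apply: contrapT => hn; apply: P0.
    have hb : mu.-negligible (N0 `|` \bigcup_j (Pk j)).
      apply: negligibleU; first by exists N0; split.
      apply: negligible_bigcup => j; exists (Pk j); split => //.
        by apply: SA_meas HSA _ (SAPk j).
      apply/eqP; apply: contrapT => /negP h; apply: hn; by exists j.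
    have : mu.-negligible P.
      move: hb; apply: negligibleS => x Px.
      case: (pselect (N0 x)) => [|nx]; first by left.
      right; have [gpf gnf _] := out x nx.
      have [j hj] := exists_nat (Num.max (fine (gp x)) (fine (gn x))).
      exists j => //; split; [split => //|] => /=.
      + rewrite -(fineK (x := gp x)) ?ge0_fin_numE // lee_fin ltW //.
        by apply: le_lt_trans hj; rewrite le_max lexx.
      + rewrite -(fineK (x := gn x)) ?ge0_fin_numE // lee_fin ltW //.
        by apply: le_lt_trans hj; rewrite le_max lexx orbT.
    case=> N' [mN' N'0 PN'].
    by apply/eqP; rewrite -measure_le0 -N'0 le_measure ?inE.
  have Pk_sub : Pk j `<=` Aseq k by move=> x [[[]]].
  have muPk : mu (Pk j) = m%:E.
    case: (Aat _ (SAPk j) Pk_sub) => h; first by rewrite h eqxx in Hj.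
    by rewrite h Em.
  have H := KEY true (Pk j) m eps j%:R (SAPk j) muPk m0 e0.
  have H' := H (fun x => fun '(conj (conj (conj _ h) _) _) _ => ltac:(by rewrite /= mul1r)) (fun x '(conj _ h) => h).
  have c0 : 0 < eps / (2 * (C + 1)) by rewrite divr_gt0 // mulr_gt0.
  have := young_inv_le Phi Psi Theta HPhi HPhi0 Hyoung (1 / m) _ (divr_gt0 ltr01 m0) c0 H'.
  rewrite -/th.
  have -> : 6 / (eps / (2 * (C + 1))) = 12 * (C + 1) * th / M.
    by rewrite /eps; field; rewrite !gt_eqF //; lra.
  rewrite ler_pdivlMr // /M => hh.
  have : th <= 0 by lra.
  by rewrite leNgt thp.
case: HSAfin => Fs Fcov Fsf.
pose ek (k : nat) : R := k.+1%:R^-1.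
have ek0 : forall k, 0 < ek k by move=> k; rewrite invr_gt0 ltr0n.
pose S (s : bool) (k : nat) := if s then [set x | ek k <= Eu x] else [set x | Eu x < - ek k].
pose Q (s : bool) (k i : nat) := B `&` S s k `&` [set x | (gp x <= k%:R%:E)%E]
   `&` [set x | (gn x <= k%:R%:E)%E] `&` Fs i.
have SAQ : forall s k i, SA (Q s k i).
  move=> s k i; apply: (SAI _ HSA); last exact: (Fsf i).1.
  apply: (SAI _ HSA); last exact: (SA_ele _ _ _ SAgn).
  apply: (SAI _ HSA); last exact: (SA_ele _ _ _ SAgp).
  apply: (SAI _ HSA) => //; case: s; rewrite /S.
    exact: (SA_ge _ HSA).
  exact: SA_lt.
have Qnull : forall s k i, mu (Q s k i) = 0%E.
  move=> s k i; apply: contrapT => hQ.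
  have mQ : measurable (Q s k i) by apply: SA_meas HSA _ (SAQ s k i).
  have mFi : measurable (Fs i) by apply: SA_meas HSA _ (Fsf i).1.
  have QB : Q s k i `<=` B by move=> x [[[[]]]].
  have Qfin : (mu (Q s k i) < +oo)%E.
    apply: le_lt_trans (Fsf i).2.
    by apply: le_measure; rewrite ?inE //; move=> x [].
  have [r0 Er0] : exists r0, mu (Q s k i) = r0%:E.
    by exists (fine (mu (Q s k i))); rewrite fineK // ge0_fin_numE.
  have r0p : 0 < r0.
    rewrite lt_def -lee_fin -Er0 measure_ge0 andbT.
    by apply/eqP => h; apply: hQ; rewrite Er0 h.
  set eps := ek k.
  have e0 : 0 < eps := ek0 k.
  set c := eps / (2 * (C + 1)).
  have c0 : 0 < c by rewrite divr_gt0 // mulr_gt0.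
  set Y := 6 / c.
  have Y0 : 0 <= Y by rewrite divr_ge0 // ltW.
  have TY0 : 0 <= Theta Y by apply: (y_nn HTheta).
  have [j hj] := exists_nat (r0 * (Theta Y + 1)).
  have [F [r [SAF FQ Er rp rj]]] := shrink mu SA HSA B HBnoatom (Q s k i) r0 (SAQ s k i) QB Er0 r0p j.
  have hF : forall x, F x -> ~ N0 x -> eps <= sg_ s * Eu x.
    move=> x /FQ [[[[_ Sx] _] _] _] _; move: Sx; rewrite /S /sg_; case: (s) => /= Sx.
      by rewrite mul1r.
    by rewrite mulN1r; rewrite ltrNr in Sx; apply: ltW.
  have hK : forall x, F x -> (n_ s x <= k%:R%:E)%E.
    by move=> x /FQ [[[_ h1] h2] _]; rewrite /n_; case: (s).
  have H := KEY s F r eps k%:R SAF Er rp e0 hF hK.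
  have T1 : Theta Y <= 1 / r.
    have q0 : 0 < Theta Y + 1 by lra.
    have J0 : (0 : R) < j.+1%:R by rewrite ltr0n.
    have a1 : r * j.+1%:R * (Theta Y + 1) <= r0 * (Theta Y + 1).
      by apply: ler_wpM2r => //; apply: ltW.
    have a2 : r0 * (Theta Y + 1) < j.+1%:R.
      by apply: lt_le_trans hj _; rewrite ler_nat.
    have a3 : (r * (Theta Y + 1)) * j.+1%:R < 1 * j.+1%:R.
      rewrite mul1r; apply: le_lt_trans a2.
      by apply: le_trans a1; rewrite -mulrA (mulrC (Theta Y + 1)) mulrA.
    rewrite ltr_pM2r // in a3.
    rewrite ler_pdivlMr //; lra.
  have := lemK Phi Psi Theta HPhi HPhi0 Hyoung (1 / r) c (divr_gt0 ltr01 rp) c0 H Y Y0 T1.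
  by rewrite ltxx.
have nb : mu.-negligible (N0 `|` \bigcup_k \bigcup_i (Q true k i `|` Q false k i)).
  apply: negligibleU; first by exists N0; split.
  apply: negligible_bigcup => k; apply: negligible_bigcup => i.
  apply: negligibleU.
    by exists (Q true k i); split; [exact: SA_meas HSA _ (SAQ true k i) | exact: Qnull | by []].
  by exists (Q false k i); split; [exact: SA_meas HSA _ (SAQ false k i) | exact: Qnull | by []].
move: nb; apply: negligibleS => x /= hx.
have Bx : B x by apply: contrapT => nB; apply: hx => /nB.
have Ex : Eu x != 0 by apply/eqP => h; apply: hx => _.
case: (pselect (N0 x)) => [|nx]; first by left.
right; have [gpf gnf _] := out x nx.
have : [set: T] x by [].
rewrite Fcov => -[i _ Fi].
have [k hk] := exists_nat (Num.max (Num.max (fine (gp x)) (fine (gn x))) `|Eu x|^-1).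
exists k => //; exists i => //.
have nE : 0 < `|Eu x| by rewrite normr_gt0.
have ekE : ek k < `|Eu x|.
  rewrite /ek -(invrK `|Eu x|) ltf_pV2 ?posrE ?invr_gt0 ?ltr0n //.
  apply: le_lt_trans (lt_le_trans hk _); first by rewrite le_max lexx orbT.
  by rewrite ler_nat.
have gpk : (gp x <= k%:R%:E)%E.
  rewrite -(fineK (x := gp x)) ?ge0_fin_numE // lee_fin ltW //.
  by apply: le_lt_trans hk; rewrite !le_max lexx.
have gnk : (gn x <= k%:R%:E)%E.
  rewrite -(fineK (x := gn x)) ?ge0_fin_numE // lee_fin ltW //.
  by apply: le_lt_trans hk; rewrite !le_max lexx /= orbT.
case: (ltrP 0 (Eu x)) => hE.
  left; split => //; split => //; split => //; split => //=.
  by apply: ltW; move: ekE; rewrite gtr0_norm.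
right; split => //; split => //; split => //; split => //=.
have hE' : Eu x < 0 by rewrite lt_def eq_sym Ex hE.
by move: ekE; rewrite ltr0_norm // ltrNr.
Qed.
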